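(* Let $C$ be a genus $3$ hyperelliptic curve over $\mathbb{C}$ with equation $y^2=g(x)$ for $g(x)$ a separable degree-$8$ polynomial. Let $w\in\mathbb{C}$ with $g(w)\ne0$, let $P_m^w$ be one of the two points of $C$ over $x=w$, and let $f(x)=(g(x))^{1/2}$ denote the local branch of the square root near $x=w$ whose value at $w$ is the $y$-coordinate of $P_m^w$. Let $N=\min\{n\in\mathbb{N}: n\ge5,\ f^{(n)}(w)\neq0\}$, where $f^{(n)}$ is the $n$-th derivative. Then $P_m^w$ has $2$-weight $N-5$. In particular, $P_m^w$ is a $2$-Weierstrass point if and only if $f^{(5)}(w)=0$.
   Context: For a point $P$ on a smooth projective curve $C$ of genus $g\ge2$, let $d_2=\dim H^0(C,(\Omega^1)^2)=3(g-1)$ (holomorphic quadratic differentials). Choose a basis $\psi_1,\dots,\psi_{d_2}$ with strictly increasing orders of vanishing at $P$ and set $n_i=\mathrm{ord}_P(\psi_i)+1$; the $2$-weight of $P$ is $w^{(2)}(P)=\sum_i(n_i-i)$, and $P$ is a $2$-Weierstrass point if $w^{(2)}(P)>0$. *)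

(* Defs.v *)
From mathcomp Require Import all_boot all_algebra all_field.
Set Implicit Arguments.
Unset Strict Implicit.
Unset Printing Implicit Defensive.
Import GRing.Theory Num.Theory.
Local Open Scope ring_scope.

Section Hyperelliptic.
Variable F : numClosedFieldType.

Definition ps := nat -> F.
Definition ps_poly (p : {poly F}) : ps := fun n => p`_n.
Definition ps_add (a b : ps) : ps := fun n => a n + b n.
Definition ps_mul (a b : ps) : ps := fun n => \sum_(i < n.+1) a i * b (n - i)%N.

(* coefficients s_0..s_n of the unique power series s with s_0 = b and
   s^2 = u (requires u_0 = b^2, b <> 0) *)
Fixpoint sqrt_seq (u : ps) (b : F) (n : nat) : seq F :=
  match n with
  | 0 => [:: b]
  | n'.+1 => let s := sqrt_seq u b n' in
      rcons s ((u n - \sum_(1 <= i < n) s`_i * s`_(n - i)) / (2%:R * b))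
  end.
Definition ps_sqrt (u : ps) (b : F) : ps := fun n => (sqrt_seq u b n)`_n.

Definition ps_has_val (s : ps) (v : int) : Prop :=
  exists n : nat, v = n%:Z /\ s n != 0 /\ forall m, (m < n)%N -> s m = 0.
Definition ps_val_ge (s : ps) (v : int) : Prop :=
  forall n : nat, (n%:Z < v) -> s n = 0.

(* polynomial t^M p(1/t), for M >= deg p *)
Definition rev_poly (M : nat) (p : {poly F}) : {poly F} :=
  \poly_(k < M.+1) p`_(M - k).

Definition hyperelliptic_genus3 (g : {poly F}) : Prop :=
  size g = 9%N /\ separable.separable_poly g.

(* points of the smooth projective model: affine points (a,b) with
   b^2 = g(a), and the two points at infinity, indexed by c with
   c^2 = lead_coef g (the value of y/x^4 there) *)
Inductive point := Aff of F & F | Inf of F.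

Definition on_curve (g : {poly F}) (P : point) : Prop :=
  match P with
  | Aff a b => b ^+ 2 = g.[a]
  | Inf c => c ^+ 2 = lead_coef g
  end.

(* A meromorphic quadratic differential is h dx^2 with h in the function
   field C(x) (+) C(x) y; the triple (p, q, d) denotes ((p + q y)/d) dx^2
   (with d <> 0). *)
Definition qdiff := ({poly F} * {poly F} * {poly F})%type.
Definition qd_num1 (w : qdiff) := w.1.1.
Definition qd_numy (w : qdiff) := w.1.2.
Definition qd_den (w : qdiff) := w.2.
Definition qd_valid (w : qdiff) : Prop := qd_den w != 0.

(* Equality in the function field (1, y is a basis of K over C(x)). *)
Definition qd_eq (w1 w2 : qdiff) : Prop :=
  qd_num1 w1 * qd_den w2 = qd_num1 w2 * qd_den w1 /\
  qd_numy w1 * qd_den w2 = qd_numy w2 * qd_den w1.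
Definition qd_zero : qdiff := (0, 0, 1).
Definition qd_add (w1 w2 : qdiff) : qdiff :=
  (qd_num1 w1 * qd_den w2 + qd_num1 w2 * qd_den w1,
   qd_numy w1 * qd_den w2 + qd_numy w2 * qd_den w1,
   qd_den w1 * qd_den w2).
Definition qd_scale (c : F) (w : qdiff) : qdiff :=
  (c *: qd_num1 w, c *: qd_numy w, qd_den w).

(* Local data at a point P: a power series S and an integer shift e such
   that ord_P(w) = ord_t(S) + e, where t is a local parameter at P:
   - (a,b), b <> 0 : t = x - a, y = sqrt(g(a+t)) with value b, dx = dt;
   - (a,0)         : t with x = a + t^2, y = t * sqrt(g1(a+t^2)) where
                     g = (x-a) g1, dx = 2t dt;
   - infinity c    : t = 1/x, y = t^-4 v(t), v = sqrt(t^8 g(1/t)) with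
                     v(0) = c, dx = -t^-2 dt. *)
Definition local_data (g : {poly F}) (P : point) (w : qdiff) : ps * int :=
  let p := qd_num1 w in let q := qd_numy w in let d := qd_den w in
  match P with
  | Aff a b =>
    if b != 0 then
      let sh := fun r : {poly F} => r \Po ('X + a%:P) in
      let Y := ps_sqrt (ps_poly (sh g)) b in
      (ps_add (ps_poly (sh p)) (ps_mul (ps_poly (sh q)) Y),
       - (mup a d)%:Z)
    else
      let g1 := g %/ ('X - a%:P) in
      let sh := fun r : {poly F} => r \Po ('X ^+ 2 + a%:P) in
      let Y := ps_mul (ps_poly 'X) (ps_sqrt (ps_poly (sh g1)) (sqrtC g1.[a])) in
      (ps_add (ps_poly (sh p)) (ps_mul (ps_poly (sh q)) Y),
       - (2 * mup a d)%N%:Z + 2)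
  | Inf c =>
    let M := (size p + size q + size d + 4)%N in
    let V := ps_sqrt (ps_poly (rev_poly 8 g)) c in
    (ps_add (ps_poly (rev_poly M p)) (ps_mul (ps_poly (rev_poly (M - 4) q)) V),
     - M%:Z + (size d).-1%:Z - 4)
  end.

Definition qd_has_ord (g : {poly F}) (P : point) (w : qdiff) (k : int) : Prop :=
  ps_has_val (local_data g P w).1 (k - (local_data g P w).2).
Definition qd_ord_ge (g : {poly F}) (P : point) (w : qdiff) (k : int) : Prop :=
  ps_val_ge (local_data g P w).1 (k - (local_data g P w).2).

Definition holomorphic_qd (g : {poly F}) (w : qdiff) : Prop :=
  qd_valid w /\ forall P, on_curve g P -> qd_ord_ge g P w 0.

(* d_2 = 3(g-1) = 6 for genus 3 *)
Definition lincomb (c : 'I_6 -> F) (psi : 'I_6 -> qdiff) : qdiff :=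
  \big[qd_add/qd_zero]_(i < 6) qd_scale (c i) (psi i).

Definition is_basis_H0_2K (g : {poly F}) (psi : 'I_6 -> qdiff) : Prop :=
  (forall i, holomorphic_qd g (psi i)) /\
  (forall c : 'I_6 -> F, qd_eq (lincomb c psi) qd_zero -> forall i, c i = 0) /\
  (forall w, holomorphic_qd g w -> exists c, qd_eq w (lincomb c psi)).

Definition adapted_basis (g : {poly F}) (P : point)
    (psi : 'I_6 -> qdiff) (o : 'I_6 -> nat) : Prop :=
  is_basis_H0_2K g psi /\
  (forall i, qd_has_ord g P (psi i) (o i)%:Z) /\
  (forall i j : 'I_6, (i < j)%N -> (o i < o j)%N).

(* w^(2)(P) = sum_i (n_i - i) with n_i = ord_P(psi_i) + 1, i = 1..6 *)
Definition weight_of (o : 'I_6 -> nat) : nat := \sum_(i < 6) (o i - i)%N.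

Definition two_weight (g : {poly F}) (P : point) (wt : nat) : Prop :=
  exists psi o, adapted_basis g P psi o /\ wt = weight_of o.

(* n-th derivative at w of the local branch f of sqrt(g) near x = w with
   f(w) = b: n! times the n-th Taylor coefficient of the power series f
   with f(w) = b and f^2 = g(w + t). *)
Definition branch_deriv (g : {poly F}) (w b : F) (n : nat) : F :=
  n`!%:R * ps_sqrt (ps_poly (g \Po ('X + w%:P))) b n.

End Hyperelliptic.

(* Main.v *)
Require Import Defs.
From mathcomp Require Import all_boot all_algebra all_field.
From mathcomp Require Import Rstruct complex.
From Stdlib Require Rdefinitions.
From mathcomp Require Import zify ring.
Unset Strict Implicit.
Unset Printing Implicit Defensive.
Import GRing.Theory Num.Theory.
Local Open Scope ring_scope.

Section Main.
Variable F : numClosedFieldType.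
Implicit Types (p q d r : {poly F}) (s u : ps F) (b : F).

Definition tr (n : nat) (s : ps F) : {poly F} := \poly_(i < n.+1) s i.

Lemma coef_tr n s j : (tr n s)`_j = if (j <= n)%N then s j else 0.
Proof. by rewrite /tr coef_poly ltnS. Qed.

Definition eqk n p q := forall j, (j <= n)%N -> p`_j = q`_j.

Lemma eqk_mul n p p' q q' : eqk n p p' -> eqk n q q' -> eqk n (p * q) (p' * q').
Proof.
move=> hp hq j hj; rewrite !coefM; apply: eq_bigr => i _.
rewrite hp ?hq //; last by rewrite (leq_trans _ hj) // -ltnS.
by rewrite (leq_trans _ hj) // leq_subr.
Qed.

Lemma conv_tr n (a b : ps F) j : (j <= n)%N -> ps_mul a b j = (tr n a * tr n b)`_j.
Proof.
move=> hj; rewrite coefM /ps_mul; apply: eq_bigr => i _.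
have h1 : (i <= n)%N by rewrite (leq_trans _ hj) // -ltnS.
have h2 : (j - i <= n)%N by rewrite (leq_trans _ hj) // leq_subr.
by rewrite !coef_tr h1 h2.
Qed.

Lemma tr_poly n p : eqk n (tr n (ps_poly p)) p.
Proof. by move=> j hj; rewrite coef_tr hj. Qed.

Lemma eqk_refl n p : eqk n p p.
Proof. by move=> j. Qed.

Lemma conv_poly n p s j : (j <= n)%N -> ps_mul (ps_poly p) s j = (p * tr n s)`_j.
Proof. move=> hj; rewrite (@conv_tr n _ _ j hj); exact: (@eqk_mul n _ _ _ _ (tr_poly n p) (eqk_refl n _) j hj). Qed.

Lemma low_mul p q K : (forall j, (j < K)%N -> p`_j = 0) ->
  (forall j, (j < K)%N -> (p * q)`_j = 0) /\ (p * q)`_K = p`_K * q`_0.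
Proof.
move=> hp; split.
  move=> j hj; rewrite coefM big1 // => i _; rewrite hp ?mul0r //.
  by rewrite (leq_ltn_trans _ hj) // -ltnS.
rewrite coefM big_ord_recr /= subnn big1 ?add0r // => i _.
by rewrite hp ?mul0r.
Qed.

Lemma low_mul_inv p q K : q`_0 != 0 -> (forall j, (j < K)%N -> (p * q)`_j = 0) ->
  forall j, (j < K)%N -> p`_j = 0.
Proof.
move=> hq0 h; elim/ltn_ind => j IH hj.
have := h j hj; rewrite coefM big_ord_recr /= subnn big1 ?add0r.
  by move/eqP; rewrite mulf_eq0 (negPf hq0) orbF => /eqP.
move=> i _; rewrite IH ?mul0r //; last by rewrite (ltn_trans _ hj).
Qed.

Lemma size_sqrt_seq u b n : size (sqrt_seq u b n) = n.+1.
Proof. by elim: n => [|n IH] //=; rewrite size_rcons IH. Qed.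

Lemma nth_sqrt_seq u b n i : (i <= n)%N -> (sqrt_seq u b n)`_i = ps_sqrt u b i.
Proof.
elim: n => [|n IH] hi; first by move: hi; rewrite leqn0 => /eqP ->.
case: (ltngtP i n.+1) => [hl| |->] //; last by move: hi; rewrite leqNgt => /negP.
by rewrite /= nth_rcons size_sqrt_seq hl IH.
Qed.

Lemma ps_sqrt0 u b : ps_sqrt u b 0 = b.
Proof. by []. Qed.

Lemma sqrt_rec u b n : ps_sqrt u b n.+1 =
  (u n.+1 - \sum_(1 <= i < n.+1) ps_sqrt u b i * ps_sqrt u b (n.+1 - i)%N) / (2%:R * b).
Proof.
rewrite [LHS]/ps_sqrt.
change (sqrt_seq u b n.+1) with (rcons (sqrt_seq u b n)
  ((u n.+1 - \sum_(1 <= i < n.+1) (sqrt_seq u b n)`_i * (sqrt_seq u b n)`_(n.+1 - i)) / (2%:R * b))).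
rewrite nth_rcons size_sqrt_seq.
rewrite (ltnn n.+1) (eqxx n.+1).
apply: (congr1 (fun x => (u n.+1 - x) / (2%:R * b))).
apply: eq_big_nat => i /andP[h1 h2].
have hi : (i <= n)%N by lia.
have hi' : (n.+1 - i <= n)%N by lia.
by rewrite (@nth_sqrt_seq u b n i hi) (@nth_sqrt_seq u b n _ hi').
Qed.

Lemma sqrt_neg u b n : b != 0 -> ps_sqrt u (- b) n = - ps_sqrt u b n.
Proof.
move=> hb; elim/ltn_ind: n => [[|n]] IH; first by rewrite !ps_sqrt0.
rewrite !sqrt_rec.
have -> : \sum_(1 <= i < n.+1) ps_sqrt u (-b) i * ps_sqrt u (-b) (n.+1 - i)%N =
          \sum_(1 <= i < n.+1) ps_sqrt u b i * ps_sqrt u b (n.+1 - i)%N.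
  apply: eq_big_nat => i /andP[h1 h2].
  have hi : (i < n.+1)%N by lia.
  have hi' : (n.+1 - i < n.+1)%N by lia.
  by rewrite (IH i hi) (IH _ hi') mulrNN.
by rewrite mulrN invrN mulrN.
Qed.

Lemma sqrt_odd u b : (forall k, odd k -> u k = 0) -> forall k, odd k -> ps_sqrt u b k = 0.
Proof.
move=> hu; elim/ltn_ind => [[|n]] IH //= hodd.
rewrite sqrt_rec hu //= big_nat big1 ?subr0 ?mul0r // => i /andP[h1 h2].
case hi: (odd i); first by rewrite IH ?mul0r.
have hi' : (n.+1 - i < n.+1)%N by lia.
rewrite (IH _ hi') ?mulr0 //.
rewrite oddB; last by lia.
by rewrite /= hodd hi.
Qed.

Lemma shiftK p a : (p \Po ('X - a%:P)) \Po ('X + a%:P) = p.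
Proof.
have := comp_polyXaddC_K p (- a).
by rewrite polyCN opprK.
Qed.

Lemma coef0_shift p a : (p \Po ('X + a%:P))`_0 = p.[a].
Proof. by rewrite -horner_coef0 horner_comp !hornerE. Qed.

Lemma XsubC_shift (a : F) : ('X - a%:P) \Po ('X + a%:P) = 'X.
Proof. by rewrite comp_polyB comp_polyX comp_polyC addrK. Qed.

Lemma XsubCX_shift (a : F) m : (('X - a%:P) ^+ m) \Po ('X + a%:P) = 'X^m.
Proof.
elim: m => [|m IH]; first by rewrite !expr0 comp_polyC.
by rewrite !exprS comp_polyM IH XsubC_shift.
Qed.

Lemma lowdvd p a m : (forall j, (j < m)%N -> (p \Po ('X + a%:P))`_j = 0) ->
  ('X - a%:P) ^+ m %| p.
Proof.
move=> h; set P := p \Po ('X + a%:P).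
have ht : take_poly m P = 0.
  by apply/polyP => j; rewrite coef_take_poly coef0; case: ifP => // /h.
have eP : P = drop_poly m P * 'X^m by rewrite -{1}(poly_take_drop m P) ht add0r.
have -> : p = P \Po ('X - a%:P) by rewrite comp_polyXaddC_K.
by rewrite eP comp_polyM comp_Xn_poly dvdp_mull.
Qed.

Lemma mult_decomp d a : d != 0 ->
  exists e, ~~ root e a /\ d = e * ('X - a%:P) ^+ (mup a d).
Proof.
move=> hd; have [m [e he ed]] := multiplicity_XsubC d a.
rewrite hd /= in he; exists e; split => //.
by rewrite {2}ed mupMr // mup_XsubCX eqxx.
Qed.

Lemma dvd_mup d r : d != 0 -> (forall a, ('X - a%:P) ^+ (mup a d) %| r) -> d %| r.
Proof.
move: {2}(size d) (leqnn (size d)) => n; elim: n d r => [|n IH] d r hs hd h.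
  by move: hd; rewrite -size_poly_eq0; move: hs; rewrite leqn0 => ->.
have [/eqP s1|s1] := eqVneq (size d) 1%N.
  by rewrite (eqp_dvdl _ (_ : d %= 1)) ?dvd1p // -size_poly_eq1 s1.
have [a ra] := closed_rootP d s1.
have [d' ed] := factor_theorem d a ra.
have hd' : d' != 0 by apply: contraNneq hd => e0; rewrite ed e0 mul0r.
have mupd : mup a d = (mup a d').+1.
  by rewrite ed mupM ?polyXsubC_eq0 // (mup_XsubCX 1) eqxx addn1.
have : ('X - a%:P) %| r by rewrite (dvdp_trans _ (h a)) // mupd exprS dvdp_mulr.
rewrite dvdp_XsubCl => /factor_theorem [r' er].
rewrite ed er dvdp_mul2r ?polyXsubC_eq0 //.
apply: IH => //.
  have : size d = (size d').+1 by rewrite ed size_mul ?polyXsubC_eq0 // size_XsubC addn2.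
  move=> e; move: hs; rewrite e ltnS. done.
move=> a'; have [<-|na] := eqVneq a a'.
  by have := h a; rewrite mupd exprSr er dvdp_mul2r ?polyXsubC_eq0.
have := h a'; rewrite ed mupMl; last by rewrite root_XsubC eq_sym.
by rewrite er Gauss_dvdpl // coprimep_expl // coprimep_XsubC root_XsubC.
Qed.

Lemma mup_sep (g : {poly F}) a : separable.separable_poly g -> root g a -> mup a g = 1%N.
Proof.
move=> hs ra; have g0 : g != 0 by apply: separable.separable_poly_neq0.
apply/eqP; rewrite eqn_leq mup_leq // separable.separable_nosquare ?size_XsubC //=.
by rewrite (mup_geq _ 1 g0) expr1 dvdp_XsubCl.
Qed.

Lemma ps_mulN (a : ps F) u b n : b != 0 -> ps_mul a (ps_sqrt u (- b)) n = - ps_mul a (ps_sqrt u b) n.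
Proof. by move=> hb; rewrite /ps_mul -sumrN; apply: eq_bigr => i _; rewrite sqrt_neg // mulrN. Qed.

Lemma two_neq0 : (2%:R : F) != 0.
Proof. by rewrite pnatr_eq0. Qed.

Lemma sep_pm (x y : F) : x + y = 0 -> x + - y = 0 -> x = 0 /\ y = 0.
Proof.
move=> h1 h2; have : (x + y) + (x + - y) = x *+ 2 by rewrite addrACA subrr addr0 mulr2n.
rewrite h1 h2 addr0 => /esym hx.
have hx0 : x = 0.
  by move: hx; rewrite -mulr_natr => /eqP; rewrite mulf_eq0 (negPf two_neq0) orbF => /eqP.
by split => //; move: h1; rewrite hx0 add0r.
Qed.

Ltac slia d := repeat match goal with H : context [@size _ (@polyseq _ d)] |- _ => revert H end;
  set s := size d; intros; lia.

Lemma int_inf (M s j : nat) : (0 < s)%N -> (j + s <= M + 4)%N ->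
  (j%:Z < 0 - (- M%:Z + (s.-1)%:Z - 4)).
Proof. lia. Qed.

Lemma inf_bound (g : {poly F}) (w : qdiff F) c :
  c != 0 -> qd_ord_ge g (Inf c) w 0 -> qd_ord_ge g (Inf (- c)) w 0 ->
  qd_den w != 0 ->
  (size (qd_num1 w) <= size (qd_den w) - 4)%N /\ (size (qd_numy w) <= size (qd_den w) - 8)%N.
Proof.
move: w => [[p q] d] hc; rewrite /qd_ord_ge /local_data /qd_num1 /qd_numy /qd_den /=.
set M := (size p + size q + size d + 4)%N.
move=> h1 h2 hd.
have sd : (0 < size d)%N by rewrite size_poly_gt0.
have key : forall j, (j + size d <= M + 4)%N ->
   (rev_poly M p)`_j = 0 /\ ps_mul (ps_poly (rev_poly (M - 4) q)) (ps_sqrt (ps_poly (rev_poly 8 g)) c) j = 0.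
  move=> j hj; apply: sep_pm.
    by have := h1 j; rewrite /ps_add /ps_poly; apply; apply: int_inf.
  by have := h2 j; rewrite /ps_add /ps_poly -ps_mulN //; apply; apply: int_inf.
split.
  apply/leq_sizeP => i hi.
  have [hiM|hiM] := leqP i M; last by apply/(leq_sizeP _ M) => //; rewrite /M; slia d.
  have hk : (M - i + size d <= M + 4)%N  by clearbody M; clear -hi hiM sd; set s := size d in hi sd *; lia.
  have := (key (M - i)%N hk).1; rewrite /rev_poly coef_poly.
  have -> : (M - i < M.+1)%N by slia d.
  by have -> : (M - (M - i) = i)%N by slia d.
apply/leq_sizeP => i hi.
have [hiM|hiM] := leqP i (M - 4); last by apply/(leq_sizeP _ (M - 4)) => //; rewrite /M; slia d.
pose V := ps_sqrt (ps_poly (rev_poly 8 g)) c.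
have hV : (tr (M + 4) V)`_0 != 0 by rewrite coef_tr /V ps_sqrt0.
have := @low_mul_inv (rev_poly (M - 4) q) (tr (M + 4) V) (M + 5 - size d) hV.
move=> /(_ _ (M - 4 - i)%N).
rewrite /rev_poly coef_poly.
have -> : (M - 4 - i < (M - 4).+1)%N by slia d.
have -> : (M - 4 - (M - 4 - i) = i)%N by slia d.
apply; last by slia d.
move=> j hj; rewrite -(@conv_poly (M + 4) _ _ j); last by slia d.
have hk : (j + size d <= M + 4)%N by slia d.
by rewrite (key j hk).2.
Qed.

Lemma int_aff (j m : nat) : (j < m)%N -> (j%:Z < 0 - - (m%:Z)).
Proof. lia. Qed.

Lemma aff_nonroot (g : {poly F}) (w : qdiff F) a :
  qd_den w != 0 -> ~~ root g a -> (forall P, on_curve g P -> qd_ord_ge g P w 0) ->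
  ('X - a%:P) ^+ (mup a (qd_den w)) %| qd_num1 w /\
  ('X - a%:P) ^+ (mup a (qd_den w)) %| qd_numy w.
Proof.
move: w => [[p q] d]; rewrite /qd_num1 /qd_numy /qd_den /= => hd hr H.
pose b := sqrtC g.[a].
have hb : b != 0 by rewrite sqrtC_eq0.
have hbm : - b != 0 by rewrite oppr_eq0.
have h1 := H (Aff a b) (sqrtCK _).
have h2 := H (Aff a (- b)) (etrans (sqrrN _) (sqrtCK _)).
move: h1 h2; rewrite /qd_ord_ge /local_data hb hbm /= => h1 h2.
pose Y := ps_sqrt (ps_poly (g \Po ('X + a%:P))) b.
have key : forall j, (j < mup a d)%N ->
  (p \Po ('X + a%:P))`_j = 0 /\ ps_mul (ps_poly (q \Po ('X + a%:P))) Y j = 0.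
  move=> j hj; apply: sep_pm.
    by have := h1 j; rewrite /ps_add /ps_poly; apply; apply: int_aff.
  by have := h2 j; rewrite /ps_add /ps_poly -ps_mulN //; apply; apply: int_aff.
split; apply: lowdvd => j hj; first exact: (key j hj).1.
have hY : (tr (mup a d) Y)`_0 != 0 by rewrite coef_tr /Y ps_sqrt0.
apply: (@low_mul_inv _ _ (mup a d) hY) => // k hk.
by rewrite -(@conv_poly (mup a d) _ _ k) ?(key k hk).2 // ltnW.
Qed.

Lemma int_wei (j m : nat) : (j + 2 < 2 * m)%N -> (j%:Z < 0 - (- (2 * m)%N%:Z + 2)).
Proof. lia. Qed.

Lemma shift2 r (a : F) : r \Po ('X ^+ 2 + a%:P) = (r \Po ('X + a%:P)) \Po 'X^2.
Proof. by rewrite -comp_polyA comp_polyD comp_polyX comp_polyC. Qed.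

Lemma coefX2 (P : {poly F}) k : (P \Po 'X^2)`_k = if (2 %| k)%N then P`_(k %/ 2) else 0.
Proof. exact: coef_comp_poly_Xn. Qed.

Lemma weier_q (Q : {poly F}) (Z : ps F) n j : (forall k, odd k -> Z k = 0) -> (j <= n)%N ->
  ps_mul (ps_poly (Q \Po 'X^2)) (ps_mul (ps_poly ('X : {poly F})) Z) j =
  ('X * ((Q * tr n (fun k => Z (2 * k)%N)) \Po 'X^2))`_j.
Proof.
move=> hZ hj; rewrite (@conv_poly n _ _ j hj).
pose T2 := tr n (fun k => Z (2 * k)%N).
have e : eqk n (tr n (ps_mul (ps_poly ('X : {poly F})) Z)) ('X * (T2 \Po 'X^2)).
  move=> k hk; rewrite coef_tr hk (@conv_poly n _ _ k hk) !coefXM.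
  case: eqP => // /eqP k0; rewrite coef_tr coefX2 /T2 coef_tr.
  have -> : (k.-1 <= n)%N by rewrite (leq_trans _ hk) // leq_pred.
  case: ifP => h2.
    have -> : (k.-1 %/ 2 <= n)%N by rewrite (leq_trans _ hk) // (leq_trans (leq_div _ _)) // leq_pred.
    by rewrite mulnC divnK.
  by rewrite hZ //; move: h2; rewrite dvdn2 => /negbFE.
rewrite (@eqk_mul n _ _ _ _ (eqk_refl n _) e j hj).
by rewrite -/T2 comp_polyM mulrCA.
Qed.

Lemma weier_even (P Q : {poly F}) (Z : ps F) n i : (forall k, odd k -> Z k = 0) -> (2 * i <= n)%N ->
  ps_add (ps_poly (P \Po 'X^2)) (ps_mul (ps_poly (Q \Po 'X^2)) (ps_mul (ps_poly ('X : {poly F})) Z)) (2 * i)%N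
  = P`_i.
Proof.
move=> hZ hi; rewrite /ps_add (@weier_q _ _ _ _ hZ hi) /ps_poly coefX2 dvdn_mulr // mulKn //.
rewrite coefXM; case: eqP => [_|/eqP i0]; first by rewrite addr0.
rewrite coefX2; case: ifP; last by rewrite addr0.
by move=> /dvdnP [k hk]; exfalso; lia.
Qed.

Lemma weier_odd (P Q : {poly F}) (Z : ps F) n i : (forall k, odd k -> Z k = 0) -> ((2 * i).+1 <= n)%N ->
  ps_add (ps_poly (P \Po 'X^2)) (ps_mul (ps_poly (Q \Po 'X^2)) (ps_mul (ps_poly ('X : {poly F})) Z)) (2 * i).+1
  = (Q * tr n (fun k => Z (2 * k)%N))`_i.
Proof.
move=> hZ hi; rewrite /ps_add (@weier_q _ _ _ _ hZ hi) /ps_poly coefX2 coefXM /=.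
rewrite coefX2 dvdn_mulr // mulKn // dvdn2 /= oddM /= add0r.
by [].
Qed.

Lemma aff_root (g : {poly F}) (w : qdiff F) a :
  separable.separable_poly g ->
  qd_den w != 0 -> root g a -> (forall P, on_curve g P -> qd_ord_ge g P w 0) ->
  ('X - a%:P) ^+ (mup a (qd_den w)).-1 %| qd_num1 w /\
  ('X - a%:P) ^+ (mup a (qd_den w)).-1 %| qd_numy w.
Proof.
move: w => [[p q] d]; rewrite /qd_num1 /qd_numy /qd_den /= => hs hd hr H.
have h := H (Aff a 0); move: h; rewrite /on_curve expr0n /= (eqP hr) => /(_ erefl).
rewrite /qd_ord_ge /local_data eqxx /= => h.
set g1 := g %/ ('X - a%:P).
have eg : g = g1 * ('X - a%:P) by rewrite divpK // dvdp_XsubCl.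
have hg1 : g1.[a] != 0.
  apply/negP => /eqP r1.
  have := @separable.separable_nosquare _ g ('X - a%:P) 2 hs isT; rewrite size_XsubC => /(_ isT).
  have [g2 e2] := factor_theorem g1 a (introT eqP r1).
  by rewrite {1}eg e2 -mulrA -expr2 dvdp_mull.
pose z := sqrtC g1.[a].
have hz : z != 0 by rewrite sqrtC_eq0.
pose Z := ps_sqrt (ps_poly (g1 \Po ('X ^+ 2 + a%:P))) z.
have hZ : forall k, odd k -> Z k = 0.
  apply: sqrt_odd => k hk; rewrite /ps_poly shift2 coefX2 dvdn2 hk //.
move: h; rewrite /qd_num1 /qd_numy /= (shift2 p) (shift2 q) -/g1 -/z -/Z => h.
set m := mup a d.
have hS : forall j, (j + 2 < 2 * m)%N -> _ := fun j hj => h j (@int_wei j m hj).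
split; apply: lowdvd => i hi.
  have hj : ((2 * i)%N + 2 < 2 * m)%N by lia.
  by have := hS _ hj; rewrite (@weier_even _ _ _ (2 * m) i hZ) //; lia.
have hT : (tr (2 * m) (fun k => Z (2 * k)%N))`_0 != 0 by rewrite coef_tr.
apply: (@low_mul_inv _ _ m.-1 hT) => // k hk.
have hj : ((2 * k).+1 + 2 < 2 * m)%N by lia.
by have := hS _ hj; rewrite (@weier_odd _ _ _ (2 * m) k hZ) //; lia.
Qed.

Lemma size_quot (p P d g : {poly F}) k : size g = 9%N -> d != 0 ->
  p * g = P * d -> (size p <= size d - k)%N -> (size P <= 9 - k)%N.
Proof.
move=> sg hd e hs.
have g0 : g != 0 by rewrite -size_poly_eq0 sg.
have [pz|p0] := eqVneq p 0.
  move: e; rewrite pz mul0r => /esym/eqP; rewrite mulf_eq0 (negPf hd) orbF => /eqP ->.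
  by rewrite size_poly0.
have P0 : P != 0 by apply: contraNneq (mulf_neq0 p0 g0) => P0; rewrite e P0 mul0r.
have := congr1 (fun r : {poly F} => size r) e; rewrite /= !size_mul // sg.
have : (0 < size p)%N by rewrite size_poly_gt0.
have : (0 < size P)%N by rewrite size_poly_gt0.
move: hs; move: (size p) (size P) (size d) => a b c; lia.
Qed.

Lemma classify (g : {poly F}) (W : qdiff F) : hyperelliptic_genus3 g -> holomorphic_qd g W ->
  exists (P : {poly F}) (c : F), (size P <= 5)%N /\
    qd_num1 W * g = P * qd_den W /\ qd_numy W * g = c%:P * qd_den W.
Proof.
move=> [sg hs] [hd H].
have g0 : g != 0 by rewrite -size_poly_eq0 sg.
have hdiv : forall a, ('X - a%:P) ^+ (mup a (qd_den W)) %| qd_num1 W * g /\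
                      ('X - a%:P) ^+ (mup a (qd_den W)) %| qd_numy W * g.
  move=> a; have [hr|hr] := boolP (root g a); last first.
    by have [h1 h2] := @aff_nonroot _ _ _ hd hr H; rewrite !dvdp_mulr.
  have [h1 h2] := @aff_root _ _ _ hs hd hr H.
  have eg : g = (g %/ ('X - a%:P)) * ('X - a%:P) by rewrite divpK // dvdp_XsubCl.
  case: (mup a (qd_den W)) h1 h2 => [|m] h1 h2; first by rewrite expr0 !dvd1p.
  by rewrite eg !mulrA exprSr !dvdp_mul // ?dvdp_mulr.
have d1 : qd_den W %| qd_num1 W * g by apply: dvd_mup => // a; exact: (hdiv a).1.
have d2 : qd_den W %| qd_numy W * g by apply: dvd_mup => // a; exact: (hdiv a).2.
pose c0 := sqrtC (lead_coef g).
have hc0 : c0 != 0 by rewrite sqrtC_eq0 lead_coef_eq0.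
have hi1 := H (Inf c0) (sqrtCK _).
have hi2 := H (Inf (- c0)) (etrans (sqrrN _) (sqrtCK _)).
have [s1 s2] := @inf_bound _ _ _ hc0 hi1 hi2 hd.
exists (qd_num1 W * g %/ qd_den W), (qd_numy W * g %/ qd_den W)`_0.
have e1 := esym (divpK d1); have e2 := esym (divpK d2).
split; first exact: (@size_quot _ _ _ _ _ sg hd e1 s1).
split => //.
by rewrite -size1_polyC // (@size_quot _ _ _ _ _ sg hd e2 s2).
Qed.

Lemma int_has (k m n : nat) : (k%:Z - - (m%:Z) = n%:Z) -> n = (k + m)%N.
Proof. lia. Qed.

Lemma size_shift_le (P : {poly F}) a K : (size P <= K.+1)%N -> (size (P \Po ('X + a%:P)) <= K.+1)%N.
Proof.
move=> h; apply: leq_trans (size_comp_poly_leq _ _) _.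
rewrite size_XaddC /= muln1; case: (size P) h => //= s.
Qed.

Lemma alg1 (R : comNzRingType) (a b t g : R) : (a + b * t) * g = a * g + (b * g) * t.
Proof. by rewrite mulrDl -mulrA (mulrC t g) mulrA. Qed.

Lemma alg2 (R : comNzRingType) (P E X c T : R) :
  P * (E * X) + c * (E * X) * T = X * (E * (P + c * T)).
Proof. by rewrite mulrDr mulrDr (mulrC P) (mulrC E X) !mulrA (mulrC c X) -(mulrA X c E) (mulrC c E) !mulrA. Qed.

Lemma ord_set (g : {poly F}) (w b : F) (W : qdiff F) (k N : nat) :
  hyperelliptic_genus3 g -> g.[w] != 0 -> b != 0 -> (5 <= N)%N ->
  ps_sqrt (ps_poly (g \Po ('X + w%:P))) b N != 0 ->
  (forall n, (5 <= n < N)%N -> ps_sqrt (ps_poly (g \Po ('X + w%:P))) b n = 0) ->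
  holomorphic_qd g W -> qd_has_ord g (Aff w b) W k%:Z -> (k <= 4)%N \/ k = N.
Proof.
move=> hg gw hb h5N hN hlow hW.
have [P [c [sP [e1 e2]]]] := @classify _ _ hg hW.
move: hW => [hd _]; move: W hd e1 e2 => [[p q] d]; rewrite /qd_num1 /qd_numy /qd_den /qd_valid /= => hd e1 e2.
rewrite /qd_has_ord /local_data hb /= => [[n [en [Sn Slow]]]].
rewrite /qd_num1 /qd_numy /= in Sn Slow.
set m := mup w d in en; have {en} en := @int_has _ _ _ en.
pose sh := fun r : {poly F} => r \Po ('X + w%:P).
pose Y := ps_sqrt (ps_poly (sh g)) b.
pose T := tr n Y.
pose S' := sh p + sh q * T.
have hS : forall j, (j <= n)%N ->
    ps_add (ps_poly (sh p)) (ps_mul (ps_poly (sh q)) Y) j = S'`_j.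
  by move=> j hj; rewrite /ps_add /ps_poly (@conv_poly n _ _ j hj) coefD.
have [e [re ed]] := @mult_decomp d w hd.
rewrite -/m in ed.
pose R := sh P + c%:P * T.
have hA : sh p * sh g = sh P * sh d by rewrite /sh -!comp_polyM e1.
have hB : sh q * sh g = c%:P * sh d by rewrite /sh -comp_polyM e2 comp_polyM comp_polyC.
have hId : S' * sh g = 'X^m * (sh e * R).
  have -> : S' * sh g = sh p * sh g + (sh q * sh g) * T by rewrite /S' alg1.
  have hsd : sh (e * ('X - w%:P) ^+ m) = sh e * 'X^m by rewrite /sh comp_polyM XsubCX_shift.
  rewrite hA hB /R ed hsd; exact: alg2.
have G0 : (sh g)`_0 != 0 by rewrite /sh coef0_shift.
have E0 : (sh e)`_0 != 0 by rewrite /sh coef0_shift.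
have S'low : forall j, (j < n)%N -> S'`_j = 0.
  by move=> j hj; rewrite -(hS j (ltnW hj)); exact: (Slow j hj).
have [L1 L2] := @low_mul S' (sh g) n S'low.
have eRlow : forall i, (i < k)%N -> (sh e * R)`_i = 0.
  move=> i hi; have him : (i + m < n)%N by clear -hi en; lia.
  by have := L1 _ him; rewrite hId coefXnM ltnNge leq_addl /= addnK.
have eRk : (sh e * R)`_k != 0.
  have := L2; rewrite hId coefXnM.
  have -> : (n < m)%N = false by clear -en; lia.
  have -> : (n - m)%N = k by clear -en; lia.
  move=> ->; rewrite mulf_neq0 //.
  by rewrite -(hS n (leqnn n)).
have Rlow : forall i, (i < k)%N -> R`_i = 0.
  by apply: (@low_mul_inv R (sh e) k E0) => i hi; rewrite mulrC eRlow.
have Rk : R`_k != 0.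
  move: eRk; rewrite mulrC (@low_mul R (sh e) k Rlow).2.
  by apply: contra => /eqP ->; rewrite mul0r.
have coefR : forall i, (5 <= i)%N -> (i <= n)%N -> R`_i = c * Y i.
  move=> i h5 hi; rewrite /R coefD coefCM /T coef_tr hi.
  by rewrite (leq_sizeP _ _ (@size_shift_le P w 4 sP) i h5) add0r.
have [k4|k5] := leqP k 4; first by left.
right; have kn : (k <= n)%N by clear -en; lia.
have := Rk; rewrite coefR // => hk.
have [kN|kN|//] := ltngtP k N.
  have h5 : (5 <= k < N)%N by clear -k5 kN; lia.
  by move: hk; rewrite /Y (hlow k h5) mulr0 eqxx.
have hNn : (N <= n)%N by clear -kN en; lia.
have := Rlow N kN; rewrite (coefR N h5N hNn) /Y => /eqP; rewrite mulf_eq0 (negPf hN) orbF => /eqP c0.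
by move: hk; rewrite c0 mul0r eqxx.
Qed.

Lemma int_inf2 (M j : nat) : (j%:Z < 0 - (- M%:Z + (9%N.-1)%:Z - 4)) -> (j + 4 < M)%N.
Proof. lia. Qed.

Lemma nat_h1 (n M : nat) : (n + 4 < M)%N -> (5 <= M - n)%N.
Proof. lia. Qed.
Lemma nat_h2 (i n M : nat) : (i < n.+1)%N -> (n + 4 < M)%N -> (1 <= M - 4 - i)%N.
Proof. lia. Qed.

Lemma holo_basic (g p q : {poly F}) : hyperelliptic_genus3 g ->
  (size p <= 5)%N -> (size q <= 1)%N -> holomorphic_qd g (p, q, g).
Proof.
move=> [sg hs] sp sq.
have g0 : g != 0 by rewrite -size_poly_eq0 sg.
split => // [[a b'|c]] /=.
  rewrite /qd_ord_ge /local_data /=; have [hb|hb] := eqVneq b' 0.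
    move=> e; have ra : root g a by rewrite /root -e hb expr0n.
    rewrite hb /= ?eqxx /= (@mup_sep _ _ hs ra) => n; lia.
  move=> e; have ra : ~~ root g a by rewrite /root -e expf_neq0.
  by rewrite /= (mupNroot ra) => n; lia.
move=> _; rewrite /qd_ord_ge /local_data /qd_num1 /qd_numy /qd_den /= sg => n /int_inf2 hn.
rewrite /ps_add /ps_poly /rev_poly coef_poly.
rewrite ifT; last exact: (ltnW (leq_ltn_trans (leq_addr 4 n) hn)).
rewrite (leq_sizeP _ _ sp _ (@nat_h1 _ _ hn)).
rewrite add0r /ps_mul big1 // => i _; rewrite coef_poly.
case: ifP => _; last by rewrite mul0r.
by rewrite (leq_sizeP _ _ sq _ (@nat_h2 _ _ _ (ltn_ord i) hn)) mul0r.
Qed.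

Lemma alg3 (R : comNzRingType) (nx A S G : R) k : A * G = S * G ^+ k ->
  (nx * G ^+ k + A * G) * G = (nx + S) * G ^+ k.+1.
Proof. by move=> h; rewrite exprSr mulrDl h mulrA !mulrDl. Qed.

Lemma qd_add_den (a c : qdiff F) : qd_den (qd_add a c) = qd_den a * qd_den c.
Proof. by []. Qed.
Lemma qd_add_num1 (a c : qdiff F) : qd_num1 (qd_add a c) = qd_num1 a * qd_den c + qd_num1 c * qd_den a.
Proof. by []. Qed.
Lemma qd_add_numy (a c : qdiff F) : qd_numy (qd_add a c) = qd_numy a * qd_den c + qd_numy c * qd_den a.
Proof. by []. Qed.

Lemma big_qd (g : {poly F}) (I : Type) (r : seq I) (f : I -> qdiff F) :
  (forall i, qd_den (f i) = g) ->
  qd_den (\big[@qd_add F/qd_zero F]_(i <- r) f i) = g ^+ size r /\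
  qd_num1 (\big[@qd_add F/qd_zero F]_(i <- r) f i) * g = (\sum_(i <- r) qd_num1 (f i)) * g ^+ size r /\
  qd_numy (\big[@qd_add F/qd_zero F]_(i <- r) f i) * g = (\sum_(i <- r) qd_numy (f i)) * g ^+ size r.
Proof.
move=> hf; elim: r => [|x r [IH1 [IH2 IH3]]].
  by rewrite !big_nil /= !mul0r expr0.
rewrite !big_cons !qd_add_den !qd_add_num1 !qd_add_numy IH1 hf /=.
by split; [rewrite exprS | split; apply: alg3].
Qed.

Lemma size_idx6 : size (index_enum 'I_6) = 6%N.
Proof. by rewrite /index_enum -enumT size_enum_ord. Qed.

Lemma lincomb_facts (g : {poly F}) (c : 'I_6 -> F) (psi : 'I_6 -> qdiff F) :
  (forall i, qd_den (psi i) = g) ->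
  qd_den (lincomb c psi) = g ^+ 6 /\
  qd_num1 (lincomb c psi) * g = (\sum_(i < 6) c i *: qd_num1 (psi i)) * g ^+ 6 /\
  qd_numy (lincomb c psi) * g = (\sum_(i < 6) c i *: qd_numy (psi i)) * g ^+ 6.
Proof.
move=> h; have := @big_qd g _ (index_enum 'I_6) (fun i => qd_scale (c i) (psi i)) (fun i => h i).
by rewrite size_idx6.
Qed.

Definition Yw (g : {poly F}) w b := ps_sqrt (ps_poly (g \Po ('X + w%:P))) b.
Definition Tw (g : {poly F}) w b : {poly F} := \poly_(k < 5) Yw g w b k.
Definition psiw (g : {poly F}) w b (i : 'I_6) : qdiff F :=
  if (i < 5)%N then (('X - w%:P) ^+ i, 0, g) else (- (Tw g w b \Po ('X - w%:P)), 1, g).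
Definition ordw (N : nat) (i : 'I_6) : nat := if (i < 5)%N then nat_of_ord i else N.

Lemma psiw_den g w b i : qd_den (psiw g w b i) = g.
Proof. by rewrite /psiw; case: ifP. Qed.

Lemma sum6 (f : 'I_6 -> {poly F}) :
  \sum_(i < 6) f i = \sum_(j < 5) f (widen_ord (leqnSn 5) j) + f ord_max.
Proof. by rewrite big_ord_recr. Qed.

Lemma sum_numy g w b (c : 'I_6 -> F) :
  \sum_(i < 6) c i *: qd_numy (psiw g w b i) = (c ord_max)%:P.
Proof.
rewrite sum6 big1 ?add0r; last by move=> j _; rewrite /psiw /= ltn_ord scaler0.
by rewrite /psiw /= alg_polyC.
Qed.

Lemma sum_num1 g w b (c : 'I_6 -> F) :
  \sum_(i < 6) c i *: qd_num1 (psiw g w b i) =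
  \sum_(j < 5) c (widen_ord (leqnSn 5) j) *: ('X - w%:P) ^+ j - c ord_max *: (Tw g w b \Po ('X - w%:P)).
Proof.
rewrite sum6; congr (_ + _); first by apply: eq_bigr => j _; rewrite /psiw /= ltn_ord.
by rewrite /psiw /= scalerN.
Qed.

Lemma ord6_cases (P : 'I_6 -> Prop) :
  (forall j : 'I_5, P (widen_ord (leqnSn 5) j)) -> P ord_max -> forall i, P i.
Proof.
move=> h1 h2 i; have [hi|hi] := ltnP i 5.
  by have -> : i = widen_ord (leqnSn 5) (Ordinal hi) by apply: val_inj.
have -> // : i = ord_max by apply: val_inj => /=; move: (ltn_ord i) hi; lia.
Qed.

Lemma sumX5 (a : 'I_5 -> F) w (j : 'I_5) :
  ((\sum_(i < 5) a i *: ('X - w%:P) ^+ i) \Po ('X + w%:P))`_j = a j.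
Proof.
rewrite linear_sum coef_sum (bigD1 j) //= big1 => [|i hij].
  by rewrite linearZ /= XsubCX_shift coefZ coefXn eqxx mulr1 addr0.
rewrite linearZ /= XsubCX_shift coefZ coefXn.
by rewrite (val_eqE j i) eq_sym (negPf hij) mulr0.
Qed.

Lemma psiw_indep g w b (c : 'I_6 -> F) : hyperelliptic_genus3 g ->
  qd_eq (lincomb c (psiw g w b)) (qd_zero F) -> forall i, c i = 0.
Proof.
move=> [sg _] [e1 e2].
have g0 : g != 0 by rewrite -size_poly_eq0 sg.
have [_ [h1 hy]] := @lincomb_facts g c (psiw g w b) (psiw_den g w b).
move: e1 e2; rewrite /qd_zero /qd_num1 /qd_numy /qd_den /= !mul0r !mulr1 -/(qd_num1 _) -/(qd_numy _).
move=> e1 e2.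
move: hy h1; rewrite e2 e1 !mul0r sum_numy sum_num1 => /esym/eqP; rewrite mulf_eq0 expf_eq0 (negPf g0) andbF orbF polyC_eq0 => /eqP cm.
rewrite cm scale0r subr0 => /esym/eqP; rewrite mulf_eq0 expf_eq0 (negPf g0) andbF orbF => /eqP hs.
apply: ord6_cases => // j.
have := congr1 (fun p => (p \Po ('X + w%:P))`_j) hs.
by rewrite /= sumX5 comp_poly0 coef0.
Qed.

Lemma alg4 (R : comNzRingType) (p G6 g A P d : R) :
  A * g = P * G6 -> p * g = P * d -> (p * G6) * g = (A * d) * g.
Proof. by move=> h1 h2; rewrite [LHS]mulrAC h2 [RHS]mulrAC h1 [RHS]mulrAC. Qed.

Lemma size_comp2_le (P q : {poly F}) K : size q = 2%N -> (size P <= K.+1)%N ->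
  (size (P \Po q) <= K.+1)%N.
Proof.
move=> sq h; apply: leq_trans (size_comp_poly_leq _ _) _.
rewrite sq /= muln1; case: (size P) h => //= s.
Qed.

Lemma sumX5' (a : 'I_5 -> F) w :
  (\sum_(i < 5) a i *: ('X - w%:P) ^+ i) \Po ('X + w%:P) = \sum_(i < 5) a i *: 'X^i.
Proof.
by rewrite linear_sum; apply: eq_bigr => i _; rewrite linearZ /= XsubCX_shift.
Qed.

Lemma shift_inj (p q : {poly F}) w : p \Po ('X + w%:P) = q \Po ('X + w%:P) -> p = q.
Proof. by move=> h; rewrite -(comp_polyXaddC_K p w) h comp_polyXaddC_K. Qed.

Lemma psiw_span g w b (W : qdiff F) : hyperelliptic_genus3 g -> holomorphic_qd g W ->
  exists c, qd_eq W (lincomb c (psiw g w b)).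
Proof.
move=> hg hW.
have [P [c0 [sP [e1 e2]]]] := @classify g W hg hW.
have g0 : g != 0 by rewrite -size_poly_eq0 hg.1.
pose T' := Tw g w b \Po ('X - w%:P).
pose PP := (P + c0 *: T') \Po ('X + w%:P).
have sT' : (size T' <= 5)%N.
  by apply: size_comp2_le; [rewrite size_XsubC | rewrite /Tw size_poly].
have sPP : (size PP <= 5)%N.
  apply: size_comp2_le; first by rewrite size_XaddC.
  by rewrite (leq_trans (size_add _ _)) // geq_max sP (leq_trans (size_scale_leq _ _)).
pose cc : 'I_6 -> F := fun i => if (i < 5)%N then PP`_i else c0.
exists cc.
have [hden [h1 hy]] := @lincomb_facts g cc (psiw g w b) (psiw_den g w b).
rewrite sum_numy in hy; rewrite sum_num1 in h1.
have eS : \sum_(j < 5) cc (widen_ord (leqnSn 5) j) *: ('X - w%:P) ^+ j = P + c0 *: T'.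
  apply: (@shift_inj _ _ w); rewrite sumX5' -/PP.
  apply/polyP => k; rewrite coef_sum.
  have [k5|k5] := ltnP k 5.
    rewrite (bigD1 (Ordinal k5)) //= big1 => [|i hi].
      by rewrite coefZ coefXn eqxx mulr1 addr0 /cc /= k5.
    rewrite coefZ coefXn.
    have -> : (k == i) = false by apply/negP => /eqP e; move: hi; rewrite -val_eqE /= e eqxx.
    by rewrite mulr0.
  rewrite big1 ?(leq_sizeP _ _ sPP k k5) // => i _.
  rewrite coefZ coefXn; have -> : (k == i) = false by apply/negP => /eqP e; move: (ltn_ord i); lia.
  by rewrite mulr0.
rewrite eS /cc /= -/T' addrK in h1.
rewrite /cc /= in hy.
move: hW => [hd _].
split; rewrite hden; apply: (mulIf g0).
  exact: alg4 h1 e1.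
exact: alg4 hy e2.
Qed.

Lemma int_sh0 (k : nat) : k%:Z - - (0%N)%:Z = k%:Z.
Proof. lia. Qed.

Lemma ps_mul_poly0 (s : ps F) j : ps_mul (ps_poly 0) s j = 0.
Proof. by rewrite /ps_mul big1 // => i _; rewrite /ps_poly coef0 mul0r. Qed.

Lemma ps_mul_poly1 (s : ps F) j : ps_mul (ps_poly 1) s j = s j.
Proof. by rewrite (@conv_poly j _ _ j (leqnn j)) mul1r coef_tr leqnn. Qed.

Lemma psiw_ord g w b N (i : 'I_6) : g.[w] != 0 -> b != 0 -> (5 <= N)%N ->
  Yw g w b N != 0 -> (forall n, (5 <= n < N)%N -> Yw g w b n = 0) ->
  qd_has_ord g (Aff w b) (psiw g w b i) (ordw N i)%:Z.
Proof.
move=> gw hb h5 hN hlow.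
have rw : ~~ root g w by [].
rewrite /qd_has_ord /local_data hb /= psiw_den (mupNroot rw).
exists (ordw N i); split; first exact: int_sh0.
rewrite /psiw /ordw; case: ifP => hi /=.
  rewrite /qd_num1 /qd_numy /= XsubCX_shift comp_poly0.
  have hS : forall j, ps_add (ps_poly 'X^i) (ps_mul (ps_poly 0) (Yw g w b)) j = ('X^i)`_j.
    by move=> j; rewrite /ps_add ps_mul_poly0 addr0.
  rewrite hS coefXn eqxx oner_eq0; split => // m hm.
  rewrite hS coefXn; have -> : (m == i) = false by apply/negP => /eqP e; move: hm; rewrite e ltnn.
  by [].
rewrite /qd_num1 /qd_numy /= raddfN /= shiftK -polyC1 comp_polyC polyC1.
have hS : forall j, ps_add (ps_poly (- Tw g w b)) (ps_mul (ps_poly 1) (Yw g w b)) j =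
   if (j < 5)%N then 0 else Yw g w b j.
  move=> j; rewrite /ps_add /ps_poly ps_mul_poly1 coefN /Tw coef_poly.
  by case: ifP => _; rewrite ?addNr ?oppr0 ?add0r.
split; first by rewrite hS ltnNge h5.
move=> m hm; rewrite hS; case: ifP => // h.
by rewrite hlow // hm andbT leqNgt h.
Qed.

Lemma psiw_holo g w b i : hyperelliptic_genus3 g -> holomorphic_qd g (psiw g w b i).
Proof.
move=> hg; rewrite /psiw; case: ifP => hi; apply: holo_basic => //.
- by rewrite size_exp_XsubC.
- by rewrite size_poly0.
- rewrite size_opp; apply: size_comp2_le; first by rewrite size_XsubC.
  by rewrite /Tw size_poly.
- by rewrite size_poly1.
Qed.

Lemma bd_eq0 g w b n : (branch_deriv g w b n == 0) = (Yw g w b n == 0).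
Proof.
rewrite /branch_deriv mulf_eq0 pnatr_eq0.
by have := fact_gt0 n; rewrite lt0n => /negPf ->.
Qed.

Lemma weight_ordw N : (5 <= N)%N -> weight_of (ordw N) = (N - 5)%N.
Proof.
move=> h; rewrite /weight_of !big_ord_recr big_ord0 /= /ordw /=.
lia.
Qed.

Lemma main_gen (g : {poly F}) (w b : F) (N : nat) :
  hyperelliptic_genus3 g ->
  g.[w] != 0 ->
  b ^+ 2 = g.[w] ->
  (5 <= N)%N ->
  branch_deriv g w b N != 0 ->
  (forall n, (5 <= n < N)%N -> branch_deriv g w b n = 0) ->
  [/\ two_weight g (Aff w b) (N - 5)%N,
      (forall wt, two_weight g (Aff w b) wt -> wt = (N - 5)%N) &
      ((exists wt, two_weight g (Aff w b) wt /\ (0 < wt)%N) <->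
        branch_deriv g w b 5 = 0)].
Proof.
move=> hg gw eb h5 hN hlow.
have hb : b != 0 by apply: contraNneq gw => b0; rewrite -eb b0 expr0n.
have hYN : Yw g w b N != 0 by rewrite -bd_eq0.
have hYlow : forall n, (5 <= n < N)%N -> Yw g w b n = 0.
  by move=> n hn; apply/eqP; rewrite -bd_eq0 hlow.
have ex : two_weight g (Aff w b) (N - 5)%N.
  exists (psiw g w b), (ordw N); split; last by rewrite weight_ordw.
  split; last split.
  - split; first by move=> i; apply: psiw_holo.
    split; first by move=> c; apply: psiw_indep.
    by move=> W hW; apply: psiw_span.
  - by move=> i; apply: psiw_ord.
  - move=> i j hij; rewrite /ordw; move: (ltn_ord i) (ltn_ord j) hij.
    by case: (ltnP i 5) => hi; case: (ltnP j 5) => hj; lia.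
have uniq : forall wt, two_weight g (Aff w b) wt -> wt = (N - 5)%N.
  move=> wt [psi' [o' [[[hh _] [hord hinc]] ->]]].
  have H : forall k, (k < 6)%N -> (o' (inord k) <= 4)%N \/ o' (inord k) = N.
    move=> k hk; exact: (@ord_set g w b (psi' (inord k)) (o' (inord k)) N hg gw hb h5 hYN hYlow (hh _) (hord _)).
  have I : forall k, (k < 5)%N -> (o' (inord k) < o' (inord k.+1))%N.
    by move=> k hk; apply: hinc; rewrite !inordK //; lia.
  have H0 := H 0%N isT; have H1 := H 1%N isT; have H2 := H 2%N isT.
  have H3 := H 3%N isT; have H4 := H 4%N isT; have H5 := H 5%N isT.
  have I0 := I 0%N isT; have I1 := I 1%N isT; have I2 := I 2%N isT.
  have I3 := I 3%N isT; have I4 := I 4%N isT.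
  have E : forall i : 'I_6, o' i = ordw N i.
    move=> i; rewrite /ordw -[in LHS](inord_val i).
    case: i => [[|[|[|[|[|[|k]]]]]] hi] //=; lia.
  have -> : weight_of o' = weight_of (ordw N) by apply: eq_bigr => i _; rewrite E.
  exact: weight_ordw.
split => //; split.
  move=> [wt [hw hpos]]; have := uniq wt hw => e; rewrite e in hpos.
  by apply: hlow; lia.
move=> h5z; exists (N - 5)%N; split => //.
have : N != 5%N by apply: contraNneq hN => e; rewrite e h5z.
lia.
Qed.
End Main.


Theorem mainTheorem4 (g : {poly (Rdefinitions.R)[i]}) (w b : (Rdefinitions.R)[i])
    (N : nat) :
  hyperelliptic_genus3 g ->
  g.[w] != 0 ->
  b ^+ 2 = g.[w] ->
  (5 <= N)%N ->
  branch_deriv g w b N != 0 ->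
  (forall n, (5 <= n < N)%N -> branch_deriv g w b n = 0) ->
  [/\ two_weight g (Aff w b) (N - 5)%N,
      (forall wt, two_weight g (Aff w b) wt -> wt = (N - 5)%N) &
      ((exists wt, two_weight g (Aff w b) wt /\ (0 < wt)%N) <->
        branch_deriv g w b 5 = 0)].
Proof. exact: main_gen. Qed.
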